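(* Let $\mathcal{G}_1$ be an $r_1$-regular graph on $n_1$ vertices and $\mathcal{G}_2$ an $r_2$-regular graph on $n_2$ vertices. Let $\mu_{11},\mu_{12},\ldots,\mu_{1n_1}$ be the Laplacian eigenvalues of $\mathcal{G}_1$. Then the Laplacian characteristic polynomial of $\mathcal{G}_1\circledast\mathcal{G}_2$ satisfies $$f(L_{\mathcal{G}_1\circledast \mathcal{G}_2},x)=(x-r_1n_2-n_2)^{n_1(n_2-1)}\, f(L_{\mathcal{G}_2},x-n_2)^{n_1}\cdot \prod_{i=1}^{n_1}\big[x-n_2-n_2\mu_{1i}-n_2\chi_{L_{\mathcal{G}_2}}(x-n_2)\big].$$
   Context: All graphs are simple, finite and undirected. For a graph $\mathcal{G}$ with adjacency matrix $A_{\mathcal{G}}$ and diagonal degree matrix $D_{\mathcal{G}}$, the Laplacian matrix is $L_{\mathcal{G}}=D_{\mathcal{G}}-A_{\mathcal{G}}$. For a square matrix $M$ of order $n$, $f(M,x)=\det(xI_n-M)$ is its characteristic polynomial. The Laplacian coronal of a graph $\mathcal{G}$ on $n$ vertices is the rational function $\chi_{L_{\mathcal{G}}}(x)=\mathbf{1}_n^T(xI_n-L_{\mathcal{G}})^{-1}\mathbf{1}_n$, where $\mathbf{1}_n$ is the all-ones column vector. The graph product $\mathcal{G}_1\circledast\mathcal{G}_2$ of $\mathcal{G}_1$ (vertices $u_1,\ldots,u_{n_1}$) and $\mathcal{G}_2$ (vertices $v_1,\ldots,v_{n_2}$) has vertex set $\{a_{ik},b_{ik}:1\le i\le n_1,1\le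 k\le n_2\}$ ($2n_1n_2$ vertices) and edges: (1) $a_{ik}a_{jl}$ for all $1\le k,l\le n_2$ whenever $u_iu_j\in E(\mathcal{G}_1)$; (2) $b_{ri}b_{rj}$ for all $1\le r\le n_1$ whenever $v_iv_j\in E(\mathcal{G}_2)$; (3) $a_{ip}b_{iq}$ for all $1\le i\le n_1$ and $1\le p,q\le n_2$. The identity is an identity of rational functions in $x$. *)

(* Defs.v *)
From HB Require Import structures.
From mathcomp Require Import all_boot all_order all_algebra.
Set Implicit Arguments. Unset Strict Implicit. Unset Printing Implicit Defensive.
Import Order.TTheory GRing.Theory Num.Theory.
Local Open Scope ring_scope.

Definition simple_graph (V : finType) (e : rel V) : Prop :=
  (forall u v, e u v = e v u) /\ (forall v, ~~ e v v).

Definition deg (V : finType) (e : rel V) (v : V) : nat := #|[set y | e v y]|.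

Definition regular (V : finType) (e : rel V) (r : nat) : Prop :=
  forall v, deg e v = r.

Definition lap_mx (R : pzRingType) (V : finType) (e : rel V) : 'M[R]_#|V| :=
  \matrix_(i, j) ((deg e (enum_val i))%:R * (i == j)%:R
                  - (e (enum_val i) (enum_val j))%:R).

Definition coronal (R : fieldType) (n : nat) (L : 'M[R]_n) (x : R) : R :=
  \sum_(i < n) \sum_(j < n) (invmx (x%:M - L)) i j.

(* The product G1 circledast G2: vertices inl (i,k) = a_{ik}, inr (r,i) = b_{ri}. *)
Definition prod_rel (n1 n2 : nat) (e1 : rel 'I_n1) (e2 : rel 'I_n2)
  : rel (('I_n1 * 'I_n2) + ('I_n1 * 'I_n2))%type :=
  fun u v =>
    match u, v with
    | inl (i, _), inl (j, _) => e1 i j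
    | inr (r, i), inr (s, j) => (r == s) && e2 i j
    | inl (i, _), inr (j, _) => i == j
    | inr (j, _), inl (i, _) => i == j
    end.

(* Main.v *)
Require Import Defs.
From HB Require Import structures.
From mathcomp Require Import all_boot all_order all_algebra.
From mathcomp Require Import perm fingroup.
From mathcomp Require Import ring.
Set Warnings "-notation-overridden,-ambiguous-paths,-deprecated".
Import Order.TTheory GRing.Theory Num.Theory.
Local Open Scope ring_scope.



Lemma horner_char_poly (R : comNzRingType) n (A : 'M[R]_n) c :
  (char_poly A).[c] = \det (c%:M - A).
Proof.
rewrite /char_poly -[(\det _).[c]]/(horner_eval c _) -det_map_mx.
congr (\det _); apply/matrixP => i j.
by rewrite !mxE /= rmorphB rmorphMn /= horner_evalE hornerX horner_evalE hornerC.
Qed.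

Lemma det_reindex (R : comNzRingType) (T : finType) (f : T -> T -> R) n
  (g : 'I_n -> T) : injective g -> n = #|T| ->
  \det (\matrix_(i, j) f (g i) (g j)) =
  \det (\matrix_(i < #|T|, j < #|T|) f (enum_val i) (enum_val j)).
Proof.
move=> ig en; subst n.
have inj : injective (fun i => enum_rank (g i)).
  by move=> i j /enum_rank_inj /ig.
pose s := perm inj.
have -> : \matrix_(i, j) f (g i) (g j) =
   row_perm s (col_perm s (\matrix_(i < #|T|, j < #|T|) f (enum_val i) (enum_val j))).
  by apply/matrixP => i j; rewrite !mxE !permE /= !enum_rankK.
rewrite row_permE col_permE !det_mulmx !det_perm odd_permV mulrCA.
by rewrite -signr_addb addbb expr0 mulr1.
Qed.

Lemma det_schur (R : comNzRingType) m n (A : 'M[R]_m) B C (D : 'M[R]_n) W :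
  W *m D = 1 -> \det (block_mx A B C D) = \det D * \det (A - B *m W *m C).
Proof.
move=> WD.
have E : block_mx A B C D = block_mx 1 (B *m W) 0 1 *m block_mx (A - B *m W *m C) 0 C D.
  rewrite mulmx_block !mul1mx !mul0mx ?mulmx0 !add0r ?addr0 -[B *m W *m D]mulmxA WD mulmx1 subrK.
  reflexivity.

by rewrite E det_mulmx det_ublock det_lblock !det1 !mul1r mulrC.
Qed.

Lemma poly_ext0 (R : numDomainType) (p : {poly R}) :
  (forall c, c != 0 -> p.[c] = 0) -> p = 0.
Proof.
move=> H; apply/eqP; apply/negPn/negP => p0.
pose rs : seq R := [seq (i.+1)%:R | i <- iota 0 (size p)].
have A1 : all (root p) rs.
  by apply/allP => y /mapP [i _ ->]; apply/eqP/H; rewrite pnatr_eq0.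
have A2 : uniq rs.
  by rewrite map_inj_uniq ?iota_uniq // => i j /eqP; rewrite eqr_nat eqSS => /eqP.
by have := max_poly_roots p0 A1 A2; rewrite size_map size_iota ltnn.
Qed.

Lemma sylvester_nz (R : fieldType) q k (U : 'M[R]_(q, k)) (V : 'M[R]_(k, q)) c :
  c != 0 -> c ^+ k * \det (c%:M + U *m V) = c ^+ q * \det (c%:M + V *m U).
Proof.
move=> c0.
have e1 : \det (block_mx (c%:M : 'M_q) U (- V) 1) = \det (c%:M + U *m V).
  by rewrite (@det_schur _ q k c%:M U (-V) 1 1) ?mulmx1 // det1 mul1r mulmxN opprK.
have e2 : block_mx (c%:M : 'M_q) U (- V) 1 =
   block_mx c%:M 0 (- V) 1 *m block_mx 1 (c^-1 *: U) 0 (1 + c^-1 *: (V *m U)).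
  rewrite mulmx_block !mul0mx ?mulmx0 !mul1mx ?addr0 ?add0r !mulmx1.
  rewrite mul_scalar_mx scalerA divff // scale1r mulNmx -scalemxAr addrCA addNr addr0.
  by [].
have e3 : \det (c%:M + V *m U) = c ^+ k * \det (1 + c^-1 *: (V *m U)).
  by rewrite -detZ scalerDr scalerA divff // scale1r scalemx1.
rewrite -e1 e2 det_mulmx det_lblock det_ublock !det1 mulr1 mul1r det_scalar e3.
by rewrite mulrCA.
Qed.

Lemma sylvester (R : numFieldType) q k (U : 'M[R]_(q, k)) (V : 'M[R]_(k, q)) c :
  (k <= q)%N -> \det (c%:M + U *m V) = c ^+ (q - k) * \det (c%:M + V *m U).
Proof.
move=> kq.
pose P := char_poly (- (U *m V)) - 'X^(q - k) * char_poly (- (V *m U)).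
have HP : P = 0.
  apply: poly_ext0 => d d0; rewrite /P hornerD hornerN hornerM hornerXn.
  rewrite !horner_char_poly !opprK; apply/eqP; rewrite subr_eq0; apply/eqP.
  apply: (mulfI (expf_neq0 k d0)).
  by rewrite sylvester_nz // mulrA -exprD subnKC.
have := congr1 (horner^~ c) HP.
rewrite /P horner0 hornerD hornerN hornerM hornerXn !horner_char_poly !opprK.
by move/eqP; rewrite subr_eq0 => /eqP.
Qed.



Section BD.
Variables (R : comNzRingType) (T2 : finType) (f : T2 -> T2 -> R).
Local Notation N := #|T2|.
Let Q : 'M[R]_N := \matrix_(i, j) f (enum_val i) (enum_val j).

Fixpoint bd n : 'M[R]_(n * N) :=
  match n with 0 => 0 | n'.+1 => block_mx Q 0 0 (bd n') end.

Fixpoint gidx n : 'I_(n * N) -> 'I_n * T2 :=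
  match n return 'I_(n * N) -> 'I_n * T2 with
  | 0 => fun k => match (k : 'I_0) with Ordinal _ p => False_rect _ (notF p) end
  | n'.+1 => fun k =>
     match split (k : 'I_(N + n' * N)) with
     | inl a => (ord0, enum_val a)
     | inr b => (lift ord0 (gidx n' b).1, (gidx n' b).2)
     end
  end.
Arguments gidx {n}.

Lemma bdE n k l : bd n k l =
  ((gidx k).1 == (gidx l).1)%:R * f (gidx k).2 (gidx l).2.
Proof.
elim: n k l => [|n IH] k l; first by case: k.
rewrite /= -[k]splitK -[l]splitK !unsplitK.
case: (split k) => a; case: (split l) => b.
- by rewrite block_mxEul eqxx mul1r mxE.
- by rewrite block_mxEur mxE /= ?mul0r.
- by rewrite block_mxEdl mxE /= ?mul0r.
- by rewrite block_mxEdr IH /= (inj_eq (@lift_inj _ ord0)).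
Qed.

Lemma gidx_inj n : injective (@gidx n).
Proof.
elim: n => [|n IH] k l; first by case: k.
rewrite /= -[k]splitK -[l]splitK !unsplitK.
case: (split k) => a; case: (split l) => b /=.
- by case=> /enum_val_inj ->.
- by case=> /eqP; rewrite /bump leq0n.
- by case=> /eqP; rewrite /bump leq0n.
- case=> e1 e2; congr (rshift _ _); apply: IH.
  by move: e2; case: (gidx a) (gidx b) e1 => [a1 a2] [b1 b2] /= e1 ->; congr pair; apply: val_inj.

Qed.

Lemma det_bd n : \det (bd n) = \det Q ^+ n.
Proof. by elim: n => [|n IH]; rewrite ?det_mx00 ?expr0 //= det_ublock IH exprS. Qed.

Lemma det_blockdiag n :
  \det (\matrix_(i < #|{: 'I_n * T2}|, j < #|{: 'I_n * T2}|)
     (((enum_val i).1 == (enum_val j).1)%:R * f (enum_val i).2 (enum_val j).2))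
  = \det Q ^+ n.
Proof.
rewrite -(@det_reindex R _ (fun u v : 'I_n * T2 => (u.1 == v.1)%:R * f u.2 v.2) _ _
   (@gidx_inj n)); last by rewrite card_prod card_ord.
rewrite -det_bd; congr (\det _); apply/matrixP => i j; by rewrite mxE bdE.
Qed.
End BD.



Lemma mulmx_enum (R : comNzRingType) (T : finType) m p
  (A : 'M[R]_(m, #|T|)) (B : 'M[R]_(#|T|, p)) k l :
  (A *m B) k l = \sum_(t : T) A k (enum_rank t) * B (enum_rank t) l.
Proof.
rewrite mxE (reindex (@enum_rank T)) //; apply: onW_bij; exact: enum_rank_bij.
Qed.

Lemma sum_delta (R : comNzRingType) (T : finType) (a : T) (G : T -> R) :
  (forall t, t != a -> G t = 0) -> \sum_t G t = G a.
Proof. by move=> H; rewrite (bigD1 a) //= big1 ?addr0. Qed.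

Lemma sum_pair (R : comNzRingType) n1 n2 (G : 'I_n1 * 'I_n2 -> R) :
  \sum_t G t = \sum_i \sum_j G (i, j).
Proof. by rewrite pair_bigA; apply: eq_bigr => -[]. Qed.

Lemma sum_enum (R : comNzRingType) (T : finType) (G : 'I_#|T| -> R) :
  \sum_(i < #|T|) G i = \sum_(t : T) G (enum_rank t).
Proof. rewrite (reindex (@enum_rank T)) //; apply: onW_bij; exact: enum_rank_bij. Qed.

Lemma sum_pairn n1 n2 (G : 'I_n1 * 'I_n2 -> nat) :
  (\sum_t G t = \sum_i \sum_j G (i, j))%N.
Proof. by rewrite pair_bigA; apply: eq_bigr => -[]. Qed.

Lemma lapE (R : pzRingType) (V : finType) (e : rel V) a b :
  lap_mx R e (enum_rank a) (enum_rank b) = (deg e a)%:R * (a == b)%:R - (e a b)%:R.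
Proof. by rewrite mxE !enum_rankK (inj_eq enum_rank_inj). Qed.

Lemma card_set_sum (T : finType) (P : pred T) : #|[set y | P y]| = (\sum_y (P y : nat))%N.
Proof. by rewrite -sum1dep_card big_mkcond; apply: eq_bigr => y _; case: (P y). Qed.

Section Main.
Variables (n1 n2 r1 r2 : nat) (e1 : rel 'I_n1) (e2 : rel 'I_n2).
Hypotheses (reg1 : regular e1 r1) (reg2 : regular e2 r2).

Lemma deg_inl t : deg (prod_rel e1 e2) (inl t) = (r1 * n2 + n2)%N.
Proof.
case: t => i a; rewrite /deg card_set_sum big_sumType /= !sum_pairn /=.
have -> : (\sum_j \sum_(k < n2) (i == j : nat))%N = n2.
  rewrite (bigD1 i) //= eqxx sum_nat_const card_ord muln1 big1 ?addn0 //.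
  by move=> j /negbTE; rewrite eq_sym => ->; rewrite big1.
congr (_ + _)%N; rewrite -(reg1 i) /deg card_set_sum big_distrl /=.
by apply: eq_bigr => j _; rewrite sum_nat_const card_ord mulnC.
Qed.

Lemma deg_inr t : deg (prod_rel e1 e2) (inr t) = (r2 + n2)%N.
Proof.
case: t => i a; rewrite /deg card_set_sum big_sumType /= !sum_pairn addnC /=.
have -> : (\sum_j \sum_(k < n2) (j == i : nat))%N = n2.
  rewrite (bigD1 i) //= eqxx sum_nat_const card_ord muln1 big1 ?addn0 //.
  by move=> j /negbTE => ->; rewrite big1.
congr (_ + _)%N; rewrite -(reg2 a) /deg card_set_sum.
rewrite (bigD1 i) //= [X in (_ + X)%N]big1 => [|j /negbTE ne]; last first.
  by rewrite big1 // => b _; rewrite eq_sym ne.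
by rewrite addn0; apply: eq_bigr => b _; rewrite eqxx.
Qed.
End Main.



Section Main2.
Variables (R : realFieldType) (n1 n2 r1 r2 : nat) (e1 : rel 'I_n1) (e2 : rel 'I_n2).
Hypotheses (reg1 : regular e1 r1) (reg2 : regular e2 r2).
Variable x : R.
Local Notation T0 := ('I_n1 * 'I_n2)%type.
Local Notation V := (T0 + T0)%type.
Local Notation ev := enum_val.
Local Notation er := enum_rank.

Definition F (u v : V) : R := x * (u == v)%:R -
  ((deg (prod_rel e1 e2) u)%:R * (u == v)%:R - (prod_rel e1 e2 u v)%:R).

Definition Q2 : 'M[R]_#|'I_n2| := (x - n2%:R)%:M - lap_mx R e2.
Definition cc : R := x - (r1 * n2)%:R - n2%:R.

Lemma stepB : x%:M - lap_mx R (prod_rel e1 e2) =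
  \matrix_(i, j) F (enum_val i) (enum_val j).
Proof.
apply/matrixP => i j; rewrite !mxE /F (inj_eq enum_val_inj).
by rewrite -[x *+ _]mulr_natr.
Qed.

Lemma F_ll u v : F (inl u) (inl v) = cc * (u == v)%:R + (e1 u.1 v.1)%:R.
Proof.
rewrite /F (deg_inl _ _ _ _ e2 reg1) natrD /cc.
have -> : (inl u == inl v :> V) = (u == v) by [].
case: u v => i a [j b] /=; ring.
Qed.

Lemma F_lr u v : F (inl u) (inr v) = (u.1 == v.1)%:R.
Proof.
rewrite /F.
have -> : (inl u == inr v :> V) = false by [].
case: u v => i a [j b] /=; ring.
Qed.

Lemma F_rl u v : F (inr u) (inl v) = (u.1 == v.1)%:R.
Proof.
rewrite /F.
have -> : (inr u == inl v :> V) = false by [].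
case: u v => i a [j b] /=; rewrite eq_sym; ring.
Qed.

Lemma F_rr u v : F (inr u) (inr v) = (u.1 == v.1)%:R * Q2 (er u.2) (er v.2).
Proof.
rewrite /F (deg_inr _ _ _ e1 _ reg2) /Q2 !mxE !enum_rankK (inj_eq enum_rank_inj) reg2 natrD.
have -> : (inr u == inr v :> V) = (u == v) by [].
case: u v => i a [j b] /=; rewrite xpair_eqE.
case: (i == j); case: (a == b); rewrite /=; ring.
Qed.

Local Notation q := #|{: T0}|.

Definition gV (k : 'I_(q + q)) : V :=
  match split k with inl a => inl (ev a) | inr b => inr (ev b) end.

Lemma gV_inj : injective gV.
Proof.
move=> k l; rewrite /gV -[k]splitK -[l]splitK !unsplitK.
case: (split k) => a; case: (split l) => b //= [] /enum_val_inj -> //.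
Qed.

Lemma blocks (G : V -> V -> R) :
  \matrix_(i, j) G (gV i) (gV j) =
  block_mx (\matrix_(i < q, j < q) G (inl (ev i)) (inl (ev j)))
           (\matrix_(i < q, j < q) G (inl (ev i)) (inr (ev j)))
           (\matrix_(i < q, j < q) G (inr (ev i)) (inl (ev j)))
           (\matrix_(i < q, j < q) G (inr (ev i)) (inr (ev j))).
Proof.
apply/matrixP => i j; rewrite mxE /gV -[i]splitK -[j]splitK !unsplitK.
case: (split i) => a; case: (split j) => b.
- by rewrite block_mxEul mxE.
- by rewrite block_mxEur mxE.
- by rewrite block_mxEdl mxE.
- by rewrite block_mxEdr mxE.
Qed.

Definition Wm : 'M[R]_q := \matrix_(i, j)
  (((ev i).1 == (ev j).1)%:R * invmx Q2 (er (ev i).2) (er (ev j).2)).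
Definition Bb : 'M[R]_q := \matrix_(i, j) F (inr (ev i)) (inr (ev j)).

Lemma WB : Q2 \in unitmx -> Wm *m Bb = 1.
Proof.
move=> uQ; apply/matrixP => k l.
rewrite mulmx_enum !mxE -(inj_eq enum_val_inj).
under eq_bigr => t _ do rewrite /Wm /Bb !mxE !enum_rankK F_rr.
move: (ev k) (ev l) => -[i a] [j b] /=.
rewrite sum_pair (@sum_delta _ _ i) => [|t ne]; last first.
  by apply: big1 => s _ /=; rewrite eq_sym (negbTE ne) mulr0n !mul0r.
rewrite /= eqxx xpair_eqE.
under eq_bigr => s _ do rewrite mul1r mulrCA.
rewrite -mulr_sumr.
have -> : \sum_(s < n2) invmx Q2 (er a) (er s) * Q2 (er s) (er b) =
          (invmx Q2 *m Q2) (er a) (er b) by rewrite mulmx_enum.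
rewrite mulVmx // mxE (inj_eq enum_rank_inj).
by case: (i == j); case: (a == b); rewrite /= ?mul1r ?mul0r.
Qed.

Definition Aa : 'M[R]_q := \matrix_(i, j) F (inl (ev i)) (inl (ev j)).
Definition Ab : 'M[R]_q := \matrix_(i, j) F (inl (ev i)) (inr (ev j)).
Definition Ba : 'M[R]_q := \matrix_(i, j) F (inr (ev i)) (inl (ev j)).
Definition chi : R := coronal (lap_mx R e2) (x - n2%:R).
Definition Um : 'M[R]_(q, #|'I_n1|) := \matrix_(k, m) (((ev k).1 == ev m)%:R).
Definition Vm : 'M[R]_(#|'I_n1|, q) :=
  \matrix_(m, l) ((e1 (ev m) (ev l).1)%:R - chi * (ev m == (ev l).1)%:R).
Definition rs (b : 'I_n2) : R := \sum_(a : 'I_n2) invmx Q2 (er a) (er b).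

Lemma AbW k m : (Ab *m Wm) k m = ((ev k).1 == (ev m).1)%:R * rs (ev m).2.
Proof.
rewrite mulmx_enum.
under eq_bigr => t _ do rewrite /Wm /Ab !mxE !enum_rankK F_lr.
move: (ev k) (ev m) => -[i a] [j b] /=.
rewrite sum_pair (@sum_delta _ _ i) => [|t ne]; last first.
  by apply: big1 => s _ /=; rewrite eq_sym (negbTE ne) mulr0n !mul0r.
rewrite /= eqxx /rs mulr_sumr; apply: eq_bigr => s _; rewrite mul1r //.
Qed.

Lemma chiE : chi = \sum_(a : 'I_n2) \sum_(b : 'I_n2) invmx Q2 (er a) (er b).
Proof.
rewrite /chi /coronal sum_enum; apply: eq_bigr => a _; rewrite sum_enum //.
Qed.

Lemma schur_S : Aa - Ab *m Wm *m Ba = cc%:M + Um *m Vm.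
Proof.
apply/matrixP => k l.
rewrite [(Aa - _) k l]mxE [(- (_ : 'M_q)) k l]mxE [(cc%:M + _) k l]mxE mulmx_enum.
under eq_bigr => t _ do rewrite AbW /Ba mxE !enum_rankK F_rl.
rewrite mulmx_enum.
under [X in _ = _ + X]eq_bigr => t _ do rewrite /Um /Vm !mxE !enum_rankK.
rewrite /Aa !mxE -[k == l](inj_eq enum_val_inj) F_ll.
move: (ev k) (ev l) => -[i a] [j b] /=.
rewrite (@sum_delta _ _ i (fun t => (i == t)%:R * _)) => [|t ne]; last first.
  by rewrite eq_sym (negbTE ne) mulr0n mul0r.
rewrite sum_pair (@sum_delta _ _ i) => [|t ne]; last first.
  by apply: big1 => s _ /=; rewrite eq_sym (negbTE ne) mulr0n !mul0r.
rewrite /= eqxx chiE exchange_big /=.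
under eq_bigr => s _ do rewrite mul1r.
rewrite -mulr_suml /rs mulr_natr; ring.
Qed.

Lemma VU_eq : (0 < n2)%N ->
  cc%:M + Vm *m Um =
  n2%:R *: (((x - n2%:R - n2%:R * chi) / n2%:R)%:M - lap_mx R e1).
Proof.
move=> n2p; have n20 : n2%:R != 0 :> R by rewrite pnatr_eq0 -lt0n.
apply/matrixP => m m'.
rewrite [(cc%:M + _) m m']mxE mulmx_enum [((_ *: _) : 'M_#|'I_n1|) m m']mxE.
under eq_bigr => t _ do rewrite /Um /Vm !mxE !enum_rankK.
rewrite !mxE reg1 -(inj_eq enum_val_inj).
move: (ev m) (ev m') => u u'.
rewrite sum_pair (@sum_delta _ _ u') => [|t ne]; last first.
  by apply: big1 => s _ /=; rewrite (negbTE ne) mulr0n !mulr0.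
rewrite /= eqxx.
under eq_bigr => s _ do rewrite mulr1.
rewrite sumr_const card_ord.
rewrite /cc -(mulr_natr (_ - chi * _) n2) natrM.
case: (u == u'); rewrite ?mulr1n ?mulr0n /=; field.
all: by rewrite ?n20.
Qed.

Lemma final_det (mu : 'I_n1 -> R) : (0 < n2)%N ->
  char_poly (lap_mx R e1) = \prod_(i < n1) ('X - (mu i)%:P) ->
  \det (cc%:M + Um *m Vm) =
  cc ^+ (n1 * (n2 - 1)) * \prod_(i < n1) (x - n2%:R - n2%:R * mu i - n2%:R * chi).
Proof.
move=> n2p hc; have n20 : n2%:R != 0 :> R by rewrite pnatr_eq0 -lt0n.
rewrite sylvester; last by rewrite card_prod !card_ord leq_pmulr.
have -> : (q - #|'I_n1| = n1 * (n2 - 1))%N by rewrite card_prod !card_ord mulnBr muln1.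
rewrite VU_eq // detZ -horner_char_poly hc.
rewrite horner_prod; congr (_ * _).
rewrite -prodr_const -big_split /=; apply: eq_bigr => i _.
rewrite hornerXsubC; field.
by rewrite pnatr_eq0 -lt0n.
Qed.

Lemma det_Bb : \det Bb = \det Q2 ^+ n1.
Proof.
have -> : Bb = \matrix_(i, j) (((ev i).1 == (ev j).1)%:R *
    (fun a b : 'I_n2 => Q2 (er a) (er b)) (ev i).2 (ev j).2).
  by apply/matrixP => i j; rewrite [LHS]mxE [RHS]mxE F_rr.
rewrite (@det_blockdiag _ _ (fun a b : 'I_n2 => Q2 (er a) (er b)) n1); congr (\det _ ^+ _); apply/matrixP => i j.
by rewrite mxE !enum_valK.
Qed.

Lemma main_det (mu : 'I_n1 -> R) : (0 < n2)%N ->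
  char_poly (lap_mx R e1) = \prod_(i < n1) ('X - (mu i)%:P) ->
  Q2 \in unitmx ->
  (char_poly (lap_mx R (prod_rel e1 e2))).[x] =
  cc ^+ (n1 * (n2 - 1)) * (char_poly (lap_mx R e2)).[x - n2%:R] ^+ n1
  * \prod_(i < n1) (x - n2%:R - n2%:R * mu i - n2%:R * chi).
Proof.
move=> n2p hc uQ.
rewrite horner_char_poly stepB -(@det_reindex _ _ F _ gV gV_inj); last first.
  by rewrite card_sum.
rewrite blocks (@det_schur _ _ _ _ _ _ Bb Wm (WB uQ)) schur_S det_Bb (final_det _ n2p hc).
rewrite horner_char_poly -/Q2; ring.
Qed.
End Main2.


Theorem theorem1 (R : realFieldType) (n1 n2 r1 r2 : nat)
  (e1 : rel 'I_n1) (e2 : rel 'I_n2) (mu : 'I_n1 -> R) :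
  (0 < n1)%N -> (0 < n2)%N ->
  simple_graph e1 -> simple_graph e2 ->
  regular e1 r1 -> regular e2 r2 ->
  char_poly (lap_mx R e1) = \prod_(i < n1) ('X - (mu i)%:P) ->
  forall x : R,
    (x - n2%:R)%:M - lap_mx R e2 \in unitmx ->
    (char_poly (lap_mx R (prod_rel e1 e2))).[x] =
      (x - (r1 * n2)%:R - n2%:R) ^+ (n1 * (n2 - 1))
      * (char_poly (lap_mx R e2)).[x - n2%:R] ^+ n1
      * \prod_(i < n1) (x - n2%:R - n2%:R * mu i
                          - n2%:R * coronal (lap_mx R e2) (x - n2%:R)).
Proof.
move=> _ n2p _ _ reg1 reg2 hc x uQ.
exact: (@main_det R n1 n2 r1 r2 e1 e2 reg1 reg2 x mu n2p hc uQ).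
Qed.
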